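(* Let $\Psi=\begin{bmatrix}\Psi_{11}&\Psi_{12}\\ \Psi_{12}^\top&\Psi_{22}\end{bmatrix}$ be symmetric with $\Psi_{11}\in\mathbb{R}^{p\times p}$, $\Psi_{22}\in\mathbb{R}^{q\times q}$, and let $\mathcal{M}=\{Z\in\mathbb{R}^{p\times q}: \begin{bmatrix} I\\ Z^\top\end{bmatrix}^\top\Psi\begin{bmatrix} I\\ Z^\top\end{bmatrix}\ge0\}$. Define $\Psi|\Psi_{22}=\Psi_{11}-\Psi_{12}\Psi_{22}^{-1}\Psi_{12}^\top$ and $\Psi^\sharp=\begin{bmatrix}0&-I_q\\ I_p&0\end{bmatrix}\Psi^{-1}\begin{bmatrix}0&-I_p\\ I_q&0\end{bmatrix}$. Suppose $\Psi|\Psi_{22}>0$ and $\Psi_{22}<0$. Then $\mathcal{M}=\mathcal{M}_1=\mathcal{M}_2$, where \[ \mathcal{M}_1=\left\{Z: \begin{bmatrix} I\\ Z\end{bmatrix}^\top\Psi^\sharp\begin{bmatrix} I\\ Z\end{bmatrix}\ge0\right\},\qquad \mathcal{M}_2=\left\{Z: \begin{bmatrix} I\\ Z^\top\end{bmatrix}^\top\Psi\begin{bmatrix} I\\ Z^\top\end{bmatrix}=\mathcal{Q}\ \text{for some}\ \mathcal{Q}\ \text{with}\ 0\le\mathcal{Q}\le\Psi|\Psi_{22}\right\}. \] *)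

(* Defs.v *)
From HB Require Import structures.
From mathcomp Require Import all_boot all_order all_algebra.
From mathcomp Require Export reals.
Set Implicit Arguments. Unset Strict Implicit. Unset Printing Implicit Defensive.
Import Order.TTheory GRing.Theory Num.Theory.
Local Open Scope ring_scope.

Section Defs.
Variable R : realType.

Definition psdmx n (A : 'M[R]_n) : Prop :=
  A^T = A /\ forall x : 'cV[R]_n, 0 <= (x^T *m A *m x) 0 0.
Definition pdmx n (A : 'M[R]_n) : Prop :=
  A^T = A /\ forall x : 'cV[R]_n, x != 0 -> 0 < (x^T *m A *m x) 0 0.
Definition ndmx n (A : 'M[R]_n) : Prop :=
  A^T = A /\ forall x : 'cV[R]_n, x != 0 -> (x^T *m A *m x) 0 0 < 0.

Variables p q : nat.

Definition Psi (P11 : 'M[R]_p) (P12 : 'M[R]_(p, q)) (P22 : 'M[R]_q)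
  : 'M[R]_(p + q) := block_mx P11 P12 P12^T P22.

Definition schur (P11 : 'M[R]_p) (P12 : 'M[R]_(p, q)) (P22 : 'M[R]_q)
  : 'M[R]_p := P11 - P12 *m invmx P22 *m P12^T.

Definition Jl : 'M[R]_(q + p, p + q) := block_mx 0 (- 1%:M) 1%:M 0.
Definition Jr : 'M[R]_(p + q, q + p) := block_mx 0 (- 1%:M) 1%:M 0.
Definition Psi_sharp (Ps : 'M[R]_(p + q)) : 'M[R]_(q + p) :=
  Jl *m invmx Ps *m Jr.

Definition quadZ (Ps : 'M[R]_(p + q)) (Z : 'M[R]_(p, q)) : 'M[R]_p :=
  (col_mx 1%:M Z^T)^T *m Ps *m col_mx 1%:M Z^T.

Definition inM (Ps : 'M[R]_(p + q)) (Z : 'M[R]_(p, q)) : Prop :=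
  psdmx (quadZ Ps Z).
Definition inM1 (Ps : 'M[R]_(p + q)) (Z : 'M[R]_(p, q)) : Prop :=
  psdmx ((col_mx (1%:M : 'M[R]_q) Z)^T *m Psi_sharp Ps *m col_mx 1%:M Z).
Definition inM2 (Ps : 'M[R]_(p + q)) (S : 'M[R]_p) (Z : 'M[R]_(p, q)) : Prop :=
  exists Q : 'M[R]_p, quadZ Ps Z = Q /\ psdmx Q /\ psdmx (S - Q).
End Defs.

(* Main.v *)
Require Import Defs.
From HB Require Import structures.
From mathcomp Require Import all_boot all_order all_algebra.
From mathcomp Require Import reals.
From mathcomp Require Import lra.
Import Order.TTheory GRing.Theory Num.Theory.
Local Open Scope ring_scope.

Lemma ac1 (V : zmodType) (p11 a b c e : V) :
  p11 + b + (c + e) = p11 - a + (e + b + (c + a)).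
Proof.
rewrite !addrA (addrAC _ c a) (addrAC _ b a) (addrAC _ e a) subrK.
by rewrite (addrAC _ c e) (addrAC _ b e).
Qed.

Lemma ac2 (V : zmodType) (d f g h k : V) :
  - (d + f) - g + (- h - k) = - d - (k + g + (h + f)).
Proof.
rewrite !opprD !addrA.
rewrite (addrAC _ (- f) (- g)) (addrAC _ (- f) (- h)) (addrAC _ (- f) (- k)).
by rewrite (addrAC _ (- h) (- k)) (addrAC _ (- g) (- k)).
Qed.

Section Helpers.
Variable R : realType.

Lemma inv_uniq n (A B : 'M[R]_n) : A *m B = 1%:M -> invmx A = B.
Proof.
move=> h; have [uA _] := mulmx1_unit h.
by rewrite -[invmx A]mulmx1 -h mulmxA mulVmx // mul1mx.
Qed.

Lemma nz_unit n (A : 'M[R]_n) :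
  (forall x : 'cV[R]_n, x != 0 -> (x^T *m A *m x) 0 0 != 0) -> A \in unitmx.
Proof.
move=> h; rewrite unitmxE unitfE; apply/negP => /det0P [v vn0 vA].
have vT : v^T != 0.
  by apply: contra vn0 => /eqP e; rewrite -[v]trmxK e trmx0.
by have := h v^T vT; rewrite trmxK vA mul0mx mxE eqxx.
Qed.

Lemma sym_form n m (A : 'M[R]_n) (B : 'M[R]_m) (W : 'M[R]_(n, m)) :
  A^T = A -> B^T = B -> (A - W *m B *m W^T)^T = A - W *m B *m W^T.
Proof. by move=> sA sB; rewrite (raddfB (@trmx R _ _)) /= !trmx_mul trmxK sA sB mulmxA. Qed.

Lemma subE m n (A B : 'M[R]_(m, n)) i j : (A - B) i j = A i j - B i j.
Proof. by rewrite !mxE. Qed.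

Lemma formB n (x : 'cV[R]_n) (A B : 'M[R]_n) :
  (x^T *m (A - B) *m x) 0 0 = (x^T *m A *m x) 0 0 - (x^T *m B *m x) 0 0.
Proof. by rewrite mulmxBr mulmxBl !mxE. Qed.

Lemma key n m (A : 'M[R]_n) (B : 'M[R]_m) (W : 'M[R]_(n, m)) :
  A^T = A -> B^T = B -> A \in unitmx -> B \in unitmx ->
  (forall x : 'cV[R]_m, 0 <= (x^T *m B *m x) 0 0) ->
  (forall x : 'cV[R]_n, 0 <= (x^T *m (A - W *m B *m W^T) *m x) 0 0) ->
  forall y : 'cV[R]_m, 0 <= (y^T *m (invmx B - W^T *m invmx A *m W) *m y) 0 0.
Proof.
move=> sA sB uA uB pB h y.
set x := invmx A *m W *m y. set u := W^T *m x. set v := invmx B *m y.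
have iAT : (invmx A)^T = invmx A by rewrite trmx_inv sA.
have iBT : (invmx B)^T = invmx B by rewrite trmx_inv sB.
set T := y^T *m (W^T *m invmx A *m W) *m y.
have e1 : x^T *m A *m x = T.
  by rewrite /x /T !trmx_mul iAT !mulmxA mulmxKV.
have e1' : x^T *m (W *m B *m W^T) *m x = u^T *m B *m u.
  by rewrite /u /x !trmx_mul !trmxK !mulmxA.
have e2 : u^T *m B *m v = T.
  by rewrite /u /v /T /x !trmx_mul !trmxK iAT !mulmxA mulmxK.
have e3 : (v^T *m B *m u) 0 0 = (u^T *m B *m v) 0 0.
  have tr1 : forall a b : 'cV[R]_m, (a^T *m B *m b) 0 0 = (b^T *m B *m a) 0 0.
    move=> a b; have -> : a^T *m B *m b = (b^T *m B *m a)^T.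
      by rewrite !trmx_mul trmxK sB mulmxA.
    by rewrite mxE.
  exact: tr1.
have e4 : v^T *m B *m v = y^T *m invmx B *m y.
  by rewrite /v trmx_mul iBT !mulmxA mulmxKV.
have := h x; rewrite formB e1 e1' => h1.
have h2 := pB (u - v).
rewrite (raddfB (@trmx R _ _)) /= !mulmxBl !mulmxBr !subE e2 e3 e2 e4 in h2.
rewrite formB; rewrite /T in h1 h2 *.
lra.
Qed.

Lemma negE m n (A : 'M[R]_(m, n)) i j : (- A) i j = - A i j.
Proof. by rewrite !mxE. Qed.

Lemma pd_psd n (A : 'M[R]_n) :
  (forall x : 'cV[R]_n, x != 0 -> 0 < (x^T *m A *m x) 0 0) ->
  forall x : 'cV[R]_n, 0 <= (x^T *m A *m x) 0 0.
Proof.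
move=> h x; have [->|nz] := eqVneq x 0; last exact: ltW (h x nz).
by rewrite mulmx0 mxE.
Qed.

Lemma psd_inv n (A : 'M[R]_n) : A^T = A -> A \in unitmx ->
  (forall x : 'cV[R]_n, 0 <= (x^T *m A *m x) 0 0) ->
  forall x : 'cV[R]_n, 0 <= (x^T *m invmx A *m x) 0 0.
Proof.
move=> sA uA h x; have := h (invmx A *m x).
by rewrite trmx_mul trmx_inv sA !mulmxA mulmxKV.
Qed.

Lemma psd_WBW n m (B : 'M[R]_m) (W : 'M[R]_(n, m)) :
  (forall x : 'cV[R]_m, 0 <= (x^T *m B *m x) 0 0) ->
  forall x : 'cV[R]_n, 0 <= (x^T *m (W *m B *m W^T) *m x) 0 0.
Proof.
move=> h x; have := h (W^T *m x).
by rewrite trmx_mul trmxK !mulmxA.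
Qed.

End Helpers.

Theorem lemmaA1 (R : realType) (p q : nat)
  (P11 : 'M[R]_p) (P12 : 'M[R]_(p, q)) (P22 : 'M[R]_q) :
  P11^T = P11 -> P22^T = P22 ->
  pdmx (schur P11 P12 P22) -> ndmx P22 ->
  forall Z : 'M[R]_(p, q),
    (inM (Psi P11 P12 P22) Z <-> inM1 (Psi P11 P12 P22) Z) /\
    (inM (Psi P11 P12 P22) Z <-> inM2 (Psi P11 P12 P22) (schur P11 P12 P22) Z).
Proof.
move=> s11 s22 [sS pS] [_ n22] Z.
set S := schur P11 P12 P22.
set D := invmx P22.
set Si := invmx S.
set W := Z + P12 *m D.
have uS : S \in unitmx.
  by apply: nz_unit => x /pS h; rewrite gt_eqF.
have u22 : P22 \in unitmx.
  by apply: nz_unit => x /n22 h; rewrite lt_eqF.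
have sD : D^T = D by rewrite /D trmx_inv s22.
have sSi : Si^T = Si by rewrite /Si trmx_inv sS.
have sB : (- P22)^T = - P22 by rewrite (raddfN (@trmx R _ _)) /= s22.
have uB : (- P22) \in unitmx.
  by apply: nz_unit => x /n22 h; rewrite mulmxN mulNmx negE oppr_eq0 lt_eqF.
have pB : forall x : 'cV[R]_q, 0 <= (x^T *m (- P22) *m x) 0 0.
  apply: pd_psd => x /n22 h; by rewrite mulmxN mulNmx negE oppr_gt0.
have pSS : forall x : 'cV[R]_p, 0 <= (x^T *m S *m x) 0 0 by apply: pd_psd.
have iB : invmx (- P22) = - D.
  by apply: inv_uniq; rewrite mulNmx mulmxN opprK mulmxV.
have EQ1 : quadZ (Psi P11 P12 P22) Z = S - W *m (- P22) *m W^T.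
  rewrite /quadZ /Psi tr_col_mx trmx1 trmxK mul_row_block mul_row_col !mul1mx !mulmx1.
  rewrite mulmxN mulNmx opprK /W (raddfD (@trmx R _ _)) /= trmx_mul sD /S /schur -/D.
  rewrite !mulmxDl !mulmxDr !mulmxA mulmxKV // mulmxK //.
  exact: ac1.
have iPsi : invmx (Psi P11 P12 P22) = block_mx Si (- (Si *m P12 *m D))
    (- (D *m P12^T *m Si)) (D + D *m P12^T *m Si *m P12 *m D).
  apply: inv_uniq; rewrite /Psi mulmx_block (scalar_mx_block p q).
  congr block_mx; rewrite ?mulmxN ?mulmxDr ?mulmxA.
  - by rewrite -mulmxBl; exact: mulmxV uS.
  - have e : P11 *m Si *m P12 *m D - P12 *m D *m P12^T *m Si *m P12 *m D = P12 *m D.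
      by rewrite -!mulmxBl mulmxV // mul1mx.
    by rewrite addrCA [- _ + _]addrC -opprB e subrr.
  - by rewrite mulmxV // mul1mx subrr.
  - by rewrite mulmxV // !mul1mx addrCA addNr addr0.
have EQ2 : (col_mx (1%:M : 'M[R]_q) Z)^T *m Psi_sharp (Psi P11 P12 P22) *m col_mx 1%:M Z
   = invmx (- P22) - W^T *m Si *m W.
  rewrite /Psi_sharp iPsi /Jl /Jr tr_col_mx trmx1 !mulmx_block mul_row_block mul_row_col.
  rewrite !mul0mx !mulmx0 !mulNmx !mulmxN !mul1mx !mulmx1 !add0r !addr0.
  rewrite iB /W (raddfD (@trmx R _ _)) /= trmx_mul sD.
  rewrite !mulmxDl !mulmxDr !mulNmx !mulmxN !opprK !mulNmx !mulmxA.
  exact: ac2.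
have sym1 : (invmx (- P22))^T = invmx (- P22) by rewrite trmx_inv sB.
split; last first.
  split => [h|].
    exists (quadZ (Psi P11 P12 P22) Z); split => //; split => //.
    rewrite EQ1 subKr; split.
      by rewrite !trmx_mul trmxK sB mulmxA.
    exact: psd_WBW.
  by case=> Q [e [hQ _]]; rewrite /inM e.
split => h.
  rewrite /inM1 EQ2.
  split.
    have -> : W^T *m Si *m W = W^T *m Si *m W^T^T by rewrite trmxK.
    by apply: sym_form.
  apply: (@key _ _ _ S (- P22) W) => //.
  by case: h; rewrite /quadZ -/(quadZ _ _) EQ1.
rewrite /inM EQ1; split; first by apply: sym_form.
move: h; rewrite /inM1 EQ2 => -[_ h].
have := @key _ _ _ (invmx (- P22)) Si W^T sym1 sSi.
rewrite invmxK trmxK /Si invmxK; apply; first by rewrite unitmx_inv.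
- by rewrite unitmx_inv.
- exact: psd_inv.
- by rewrite -/Si.
Qed.
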